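(* Let $n\ge 1$ and let $\mu$ be a locally valid MV assignment of $M_{2,n}$. Let $w_1,w_2,w_3$ be its three locally valid extensions to $M_{2,n+1}$, ordered so that $f(w_1)\ge f(w_2)\ge f(w_3)$, where $f$ denotes the number of flippable faces. If $n=1$, or if $n\ge2$ and $(\mu(e_{3n-4}),\mu(e_{3n-3}),\mu(e_{3n-2}))$ equals $(M,V,M)$ or $(V,M,V)$, then $$(f(w_1)-f(\mu),\,f(w_2)-f(\mu),\,f(w_3)-f(\mu))=(2,0,0).$$ Otherwise $$(f(w_1)-f(\mu),\,f(w_2)-f(\mu),\,f(w_3)-f(\mu))=(2,1,0).$$
   Context: The $2\times n$ Miura-ori $M_{2,n}$ ($n\ge1$) has faces $\alpha_{i,j}$ ($i\in\{1,2\}$, $j\in\{1,\dots,n\}$), interior vertices $x_1,\dots,x_{n-1}$, and creases $e_0$ and $e_{3k-1},e_{3k},e_{3k+1}$ ($k=1,\dots,n-1$). At $x_k$ the creases are left $e_{3k-3}$, top $e_{3k-1}$, right $e_{3k}$, bottom $e_{3k+1}$ (angles adjacent to the left crease obtuse, others acute). Face $\alpha_{1,j}$ is bordered by those of $e_{3j-4}$ (iff $j\ge2$), $e_{3j-3}$, $e_{3j-1}$ (iff $j\le n-1$); $\alpha_{2,j}$ by those of $e_{3j-2}$ (iff $j\ge2$), $e_{3j-3}$, $e_{3j+1}$ (iff $j\le n-1$). An MV assignment $\mu$ maps creases to $\{M,V\}=\{1,-1\}$; it is locally valid if for each $k$ exactly one of $\mu(e_{3k-1}),\mu(e_{3k}),\mu(e_{3k+1})$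 differs from $\mu(e_{3k-3})$. The face flip $\mu_\alpha$ negates $\mu$ on the creases bordering $\alpha$; $\alpha$ is flippable under $\mu$ if $\mu,\mu_\alpha$ are both locally valid. The creases of $M_{2,n+1}$ are those of $M_{2,n}$ plus $e_{3n-1},e_{3n},e_{3n+1}$ around the new vertex $x_n$ (and the faces of column $n$ get new creases); an extension of $\mu$ is a locally valid MV assignment of $M_{2,n+1}$ agreeing with $\mu$ on the creases of $M_{2,n}$. Each locally valid $\mu$ has exactly three extensions. *)

(* Defs.v *)
From mathcomp Require Import all_boot all_order all_algebra.
Set Implicit Arguments. Unset Strict Implicit. Unset Printing Implicit Defensive.

Definition MV := bool.
Definition M : MV := true.
Definition V : MV := false.

(* An MV assignment: a map from crease indices to {M,V}; only its values on the
   creases of the pattern under consideration are relevant. *)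
Definition assignment := nat -> MV.

(* creases of M_{2,n}: e_0 and e_{3k-1}, e_{3k}, e_{3k+1} for 1 <= k <= n-1,
   i.e. indices 0 and 2, ..., 3n-2 *)
Definition is_crease (n c : nat) : bool := (c == 0) || ((2 <= c) && (c <= 3 * n - 2)).

(* local validity at vertex x_k: exactly one of top/right/bottom differs from left *)
Definition valid_at (mu : assignment) (k : nat) : bool :=
  ((mu (3 * k - 1) != mu (3 * k - 3)) + (mu (3 * k) != mu (3 * k - 3))
   + (mu (3 * k + 1) != mu (3 * k - 3)) == 1)%N.

Definition locally_valid (n : nat) (mu : assignment) : bool :=
  all (valid_at mu) (iota 1 (n - 1)).

Definition borders (n i j c : nat) : bool :=
  if i == 1 then
    [|| (2 <= j) && (c == 3 * j - 4), c == 3 * j - 3 | (j <= n - 1) && (c == 3 * j - 1)]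
  else
    [|| (2 <= j) && (c == 3 * j - 2), c == 3 * j - 3 | (j <= n - 1) && (c == 3 * j + 1)].

Definition face_flip (n i j : nat) (mu : assignment) : assignment :=
  fun c => if borders n i j c then ~~ mu c else mu c.

Definition flippable (n : nat) (mu : assignment) (i j : nat) : bool :=
  locally_valid n mu && locally_valid n (face_flip n i j mu).

Definition nflip (n : nat) (mu : assignment) : nat :=
  (\sum_(1 <= j < n.+1) (flippable n mu 1 j + flippable n mu 2 j))%N.

Definition agree (n : nat) (mu w : assignment) : Prop :=
  forall c, is_crease n c -> w c = mu c.

Definition extension (n : nat) (mu w : assignment) : Prop :=
  locally_valid n.+1 w /\ agree n mu w.

(* Main.v *)
Require Import Defs.
From mathcomp Require Import all_boot all_order all_algebra zify.
Import GRing.Theory Num.Theory.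
Set Implicit Arguments. Unset Strict Implicit.

Definition v4 (l t r b : bool) : bool := (((t != l) + (r != l) + (b != l)) == 1)%N.

Lemma valid_atE a k : valid_at a k = v4 (a (3*k-3)) (a (3*k-1)) (a (3*k)) (a (3*k+1)).
Proof. by []. Qed.

Ltac bsimp := repeat match goal with |- context[borders ?N ?i ?j ?c] =>
   first [ rewrite (_ : borders N i j c = true); last by rewrite /borders /=; lia
         | rewrite (_ : borders N i j c = false); last by rewrite /borders /=; lia ] end.

Lemma va_ext a b k : a (3*k-3) = b (3*k-3) -> a(3*k-1) = b(3*k-1) -> a (3*k) = b(3*k) ->
  a(3*k+1) = b(3*k+1) -> valid_at a k = valid_at b k.
Proof. by rewrite !valid_atE => -> -> -> ->. Qed.

Lemma ff_other N i j a k : (1 <= j)%N -> (1 <= k)%N -> k != j - 1 -> k != j ->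
  valid_at (face_flip N i j a) k = valid_at a k.
Proof.
move=> *; apply: va_ext; rewrite /face_flip;
  match goal with |- context[borders N i j ?c] =>
    (have -> // : borders N i j c = false by rewrite /borders; case: (i == 1); lia) end.
Qed.

Lemma flipE N i j a : (1 <= j <= N)%N ->
  flippable N a i j = [&& locally_valid N a,
     (j <= 1) || valid_at (face_flip N i j a) (j-1) &
     (N <= j) || valid_at (face_flip N i j a) j].
Proof.
move=> /andP[j1 jN]; rewrite /flippable /locally_valid.
case La: (all _ _) => //=.
apply/allP/andP.
- move=> H; split.
  + case: leqP => //= j2; apply: H; rewrite mem_iota; lia.
  + case: leqP => //= j2; apply: H; rewrite mem_iota; lia.
- case=> H1 H2 k; rewrite mem_iota => Hk.
  case: (eqVneq k (j-1)) => [ek|nk1].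
    by rewrite ek; move: H1; have -> : (j <= 1) = false by lia.
  case: (eqVneq k j) => [ek|nk2].
    by rewrite ek; move: H2; have -> : (N <= j) = false by lia.
  rewrite ff_other //; last by lia.
  by move/allP: La; apply; rewrite mem_iota.
Qed.

Lemma va_ff_agree n mu w i j k : (1 <= k)%N -> (k < n)%N -> (j < n)%N -> agree n mu w ->
  valid_at (face_flip n.+1 i j w) k = valid_at (face_flip n i j mu) k.
Proof.
move=> k1 kn jn ag.
have bN c : borders n.+1 i j c = borders n i j c.
  rewrite /borders. have -> : (j <= n.+1 - 1) = true by lia.
  by have -> : (j <= n - 1) = true by lia.
apply: va_ext; rewrite /face_flip bN ag //; rewrite /is_crease; lia.
Qed.

Lemma sum_common n mu w : (1 <= n)%N -> locally_valid n mu -> extension n mu w ->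
  (\sum_(1 <= j < n) (flippable n.+1 w 1 j + flippable n.+1 w 2 j) =
   \sum_(1 <= j < n) (flippable n mu 1 j + flippable n mu 2 j))%N.
Proof.
move=> n1 Lmu [Lw ag]; apply: eq_big_nat => j /andP[j1 jn].
have E i k : (1 <= k)%N -> (k < n)%N -> valid_at (face_flip n.+1 i j w) k = valid_at (face_flip n i j mu) k.
  by move=> *; apply: va_ff_agree.
rewrite !flipE ?Lw ?Lmu /=; try lia.
have -> : (n.+1 <= j) = false by lia.
have -> : (n <= j) = false by lia.
rewrite /= (E 1 j) ?(E 2 j) //.
by case: leqP => j2 //=; rewrite (E 1 (j-1)) ?(E 2 (j-1)) //; lia.
Qed.

Definition Aw (one : bool) x t r b p q s : nat :=
  ((one || v4 x (~~t) (~~r) b) && v4 (~~r) (~~p) q s)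
  + ((one || v4 x t (~~r) (~~b)) && v4 (~~r) p q (~~s))
  + v4 r (~~p) (~~q) s + v4 r p (~~q) (~~s).
Definition Bm (one : bool) x t r b : nat :=
  (one || v4 x (~~t) (~~r) b) + (one || v4 x t (~~r) (~~b)).

Lemma wside n mu w : (1 <= n)%N -> extension n mu w ->
  (flippable n.+1 w 1 n + flippable n.+1 w 2 n + flippable n.+1 w 1 n.+1 + flippable n.+1 w 2 n.+1
   = Aw (n <= 1) (mu (3*n-6)) (mu (3*n-4)) (mu (3*n-3)) (mu (3*n-2)) (w (3*n-1)) (w (3*n)) (w (3*n+1)))%N.
Proof.
move=> n1 [Lw ag].
rewrite !flipE ?Lw /=; try lia.
rewrite leqnn ltnn /=.
have -> : n.+1 - 1 = n by lia.
rewrite !valid_atE /face_flip; bsimp => /=.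
have e3 : w (3*n-3) = mu (3*n-3) by apply: ag; rewrite /is_crease; lia.
rewrite e3 /Aw.
have -> : (n < 1) = false by lia.
rewrite /= !andbT.
case: (leqP n 1) => n2 /=; first by lia.
have -> : 3 * (n-1) - 3 = 3*n-6 by lia.
have -> : 3 * (n-1) - 1 = 3*n-4 by lia.
have -> : 3 * (n-1) + 1 = 3*n-2 by lia.
have -> : 3 * (n-1) = 3*n-3 by lia.
bsimp => /=.
by rewrite e3 (ag (3*n-6)) ?(ag (3*n-4)) ?(ag (3*n-2)) //; rewrite /is_crease; lia.
Qed.

Lemma muside n mu : (1 <= n)%N -> locally_valid n mu ->
  (flippable n mu 1 n + flippable n mu 2 n
   = Bm (n <= 1) (mu (3*n-6)) (mu (3*n-4)) (mu (3*n-3)) (mu (3*n-2)))%N.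
Proof.
move=> n1 Lmu.
rewrite !flipE ?Lmu ?leqnn /= ?orbT ?andbT /Bm; try lia.
case: (leqP n 1) => n2 //=.
rewrite !valid_atE /face_flip.
have -> : 3 * (n-1) - 3 = 3*n-6 by lia.
have -> : 3 * (n-1) - 1 = 3*n-4 by lia.
have -> : 3 * (n-1) + 1 = 3*n-2 by lia.
have -> : 3 * (n-1) = 3*n-3 by lia.
by bsimp.
Qed.

Definition Ssum n mu := (\sum_(1 <= j < n) (flippable n mu 1 j + flippable n mu 2 j))%N.

Lemma decomp_w n mu w : (1 <= n)%N -> locally_valid n mu -> extension n mu w ->
  nflip n.+1 w = (Ssum n mu + Aw (n <= 1) (mu (3*n-6)) (mu (3*n-4)) (mu (3*n-3)) (mu (3*n-2)) (w (3*n-1)) (w (3*n)) (w (3*n+1)))%N.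
Proof.
move=> n1 Lmu Ew.
rewrite -wside // /nflip big_nat_recr // big_nat_recr //= (@sum_common n mu w n1 Lmu Ew) /Ssum.
lia.
Qed.

Lemma decomp_mu n mu : (1 <= n)%N -> locally_valid n mu ->
  nflip n mu = (Ssum n mu + Bm (n <= 1) (mu (3*n-6)) (mu (3*n-4)) (mu (3*n-3)) (mu (3*n-2)))%N.
Proof.
move=> n1 Lmu.
rewrite -muside // /nflip /Ssum.
case: n n1 Lmu => // n _ _.
by rewrite big_nat_recr.
Qed.
Lemma pat r p q s : v4 r p q s -> [\/ (p,q,s) = (~~r,r,r), (p,q,s) = (r,~~r,r) | (p,q,s) = (r,r,~~r)].
Proof. by case: r; case: p; case: q; case: s => //= _; first [by constructor 1 | by constructor 2 | by constructor 3]. Qed.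

Lemma brute (one x t r b p1 q1 s1 p2 q2 s2 p3 q3 s3 : bool) :
  (one || v4 x t r b) -> v4 r p1 q1 s1 -> v4 r p2 q2 s2 -> v4 r p3 q3 s3 ->
  (p1,q1,s1) != (p2,q2,s2) -> (p1,q1,s1) != (p3,q3,s3) -> (p2,q2,s2) != (p3,q3,s3) ->
  (Aw one x t r b p2 q2 s2 <= Aw one x t r b p1 q1 s1)%N ->
  (Aw one x t r b p3 q3 s3 <= Aw one x t r b p2 q2 s2)%N ->
  if one || ((t,r,b) == (M,V,M)) || ((t,r,b) == (V,M,V))
  then [&& Aw one x t r b p1 q1 s1 == Bm one x t r b + 2, Aw one x t r b p2 q2 s2 == Bm one x t r b & Aw one x t r b p3 q3 s3 == Bm one x t r b]
  else [&& Aw one x t r b p1 q1 s1 == Bm one x t r b + 2, Aw one x t r b p2 q2 s2 == Bm one x t r b + 1 & Aw one x t r b p3 q3 s3 == Bm one x t r b].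
Proof.
move=> H0 /pat[] [-> -> ->] /pat[] [-> -> ->] /pat[] [-> -> ->]; move: H0;
 by case: one; case: x; case: t; case: r; case: b.
Qed.

Definition ext n (mu : assignment) p q s : assignment :=
  fun c => if c == 3*n-1 then p else if c == 3*n then q else if c == 3*n+1 then s else mu c.

Lemma ext_old n mu p q s c : (1 <= n)%N -> (c <= 3*n-2)%N -> ext n mu p q s c = mu c.
Proof.
move=> n1 cn; rewrite /ext.
have -> : (c == 3*n-1) = false by lia.
have -> : (c == 3*n) = false by lia.
by have -> : (c == 3*n+1) = false by lia.
Qed.

Lemma ext_ok n mu p q s : (1 <= n)%N -> locally_valid n mu -> v4 (mu (3*n-3)) p q s ->
  extension n mu (ext n mu p q s).
Proof.
move=> n1 Lmu Vn; split.
- apply/allP => k; rewrite mem_iota => Hk.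
  case: (ltnP k n) => kn.
  + have -> : valid_at (ext n mu p q s) k = valid_at mu k.
      by apply: va_ext; apply: ext_old => //; lia.
    by move/allP: Lmu; apply; rewrite mem_iota; lia.
  + have -> : k = n by lia.
    rewrite valid_atE ext_old //; last by lia.
    rewrite /ext eqxx.
    have -> : (3*n == 3*n-1) = false by lia.
    rewrite eqxx.
    have -> : (3*n+1 == 3*n-1) = false by lia.
    have -> : (3*n+1 == 3*n) = false by lia.
    by rewrite eqxx.
- move=> c Hc; apply: ext_old => //; move: Hc; rewrite /is_crease; lia.
Qed.

Lemma ext_agree n mu w1 w2 : (1 <= n)%N -> extension n mu w1 -> extension n mu w2 ->
  w1 (3*n-1) = w2 (3*n-1) -> w1 (3*n) = w2 (3*n) -> w1 (3*n+1) = w2 (3*n+1) ->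
  agree n.+1 w1 w2.
Proof.
move=> n1 [_ a1] [_ a2] e1 e2 e3 c Hc.
case Hn: (is_crease n c); first by rewrite a1 // a2.
have : [|| c == 3*n-1, c == 3*n | c == 3*n+1] by move: Hc Hn; rewrite /is_crease; lia.
by case/or3P => /eqP ->.
Qed.

Lemma existence n mu : (1 <= n)%N -> locally_valid n mu ->
  (exists w1 w2 w3 : assignment,
      [/\ extension n mu w1, extension n mu w2 & extension n mu w3] /\
      [/\ ~ agree n.+1 w1 w2, ~ agree n.+1 w1 w3 & ~ agree n.+1 w2 w3]).
Proof.
move=> n1 Lmu; set r := mu (3*n-3).
exists (ext n mu (~~r) r r), (ext n mu r (~~r) r), (ext n mu r r (~~r)).
split; first by split; apply: ext_ok => //; rewrite /r; case: (mu _).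
have c1 : is_crease n.+1 (3*n-1) by rewrite /is_crease; lia.
have c2 : is_crease n.+1 (3*n) by rewrite /is_crease; lia.
have ee : (3*n == 3*n-1) = false by lia.
split => H.
- by move: (H _ c1); rewrite /ext eqxx; case: (r).
- by move: (H _ c1); rewrite /ext eqxx; case: (r).
- by move: (H _ c2); rewrite /ext ee eqxx; case: (r).
Qed.

Lemma wvalid n mu w : (1 <= n)%N -> extension n mu w ->
  v4 (mu (3*n-3)) (w (3*n-1)) (w (3*n)) (w (3*n+1)).
Proof.
move=> n1 [Lw ag].
have e3 : w (3*n-3) = mu (3*n-3) by apply: ag; rewrite /is_crease; lia.
rewrite -e3 -valid_atE.
by move/allP: Lw; apply; rewrite mem_iota; lia.
Qed.

Lemma muvalid n mu : (1 <= n)%N -> locally_valid n mu ->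
  (n <= 1) || v4 (mu (3*n-6)) (mu (3*n-4)) (mu (3*n-3)) (mu (3*n-2)).
Proof.
move=> n1 Lmu; case: leqP => //= n2.
have : valid_at mu (n-1) by move/allP: Lmu; apply; rewrite mem_iota; lia.
rewrite valid_atE.
have -> : 3 * (n-1) - 3 = 3*n-6 by lia.
have -> : 3 * (n-1) - 1 = 3*n-4 by lia.
have -> : 3 * (n-1) + 1 = 3*n-2 by lia.
by have -> : 3 * (n-1) = 3*n-3 by lia.
Qed.

Lemma distinct n mu w1 w2 : (1 <= n)%N -> extension n mu w1 -> extension n mu w2 ->
  ~ agree n.+1 w1 w2 -> (w1 (3*n-1), w1 (3*n), w1 (3*n+1)) != (w2 (3*n-1), w2 (3*n), w2 (3*n+1)).
Proof.
move=> n1 E1 E2 H; apply/negP => /eqP [e1 e2 e3]; apply: H.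
exact: (ext_agree n1 E1 E2).
Qed.

Unset Implicit Arguments.
Local Open Scope int_scope.
Theorem theorem4p2 (n : nat) (mu : assignment) :
  (1 <= n)%N -> locally_valid n mu ->
  (exists w1 w2 w3 : assignment,
      [/\ extension n mu w1, extension n mu w2 & extension n mu w3] /\
      [/\ ~ agree n.+1 w1 w2, ~ agree n.+1 w1 w3 & ~ agree n.+1 w2 w3])
  /\
  (forall w1 w2 w3 : assignment,
      extension n mu w1 -> extension n mu w2 -> extension n mu w3 ->
      ~ agree n.+1 w1 w2 -> ~ agree n.+1 w1 w3 -> ~ agree n.+1 w2 w3 ->
      (nflip n.+1 w2 <= nflip n.+1 w1)%N -> (nflip n.+1 w3 <= nflip n.+1 w2)%N ->
      let d w := (Posz (nflip n.+1 w) - Posz (nflip n mu))%R in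
      if (n == 1%N) ||
         ((2 <= n)%N &&
          (((mu (3 * n - 4)%N, mu (3 * n - 3)%N, mu (3 * n - 2)%N) == (M, V, M)) ||
           ((mu (3 * n - 4)%N, mu (3 * n - 3)%N, mu (3 * n - 2)%N) == (V, M, V))))
      then (d w1, d w2, d w3) = (2%Z, 0%Z, 0%Z)
      else (d w1, d w2, d w3) = (2%Z, 1%Z, 0%Z)).
Proof.
move=> n1 Lmu; split; first exact: existence.
move=> w1 w2 w3 E1 E2 E3 n12 n13 n23 l21 l32 d.
have B := brute (muvalid n1 Lmu) (wvalid n1 E1) (wvalid n1 E2) (wvalid n1 E3)
  (distinct n1 E1 E2 n12) (distinct n1 E1 E3 n13) (distinct n1 E2 E3 n23).
move: l21 l32; rewrite !(decomp_w n1 Lmu) // !leq_add2l => l21 l32.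
move: {B}(B l21 l32).
rewrite /d !(decomp_w n1 Lmu) // (decomp_mu n1 Lmu).
have -> : (n == 1%N) = (n <= 1)%N by lia.
have -> : (2 <= n)%N = ~~ (n <= 1)%N by lia.
case: (n <= 1)%N => /=.
- by case/and3P => /eqP -> /eqP -> /eqP ->; congr (_, _, _); lia.
- by case: ifP => _ /and3P [/eqP -> /eqP -> /eqP ->]; congr (_, _, _); lia.
Qed.
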